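(* Let $Z,Z'\subseteq A^+$. If $Z$ and $Z'$ are both prefix alt-induced codes (respectively both suffix alt-induced codes, both bifix alt-induced codes), then $ZZ'$ is a prefix (respectively suffix, bifix) alt-induced code.
   Context: $A$ is a finite alphabet, $A^+$ the set of non-empty words, $ZZ'=\{zz':z\in Z,z'\in Z'\}$. A code is a subset of $A^+$ in which every word has at most one factorization into its elements. A prefix (suffix) code is a subset of $A^+$ in which no word is a proper prefix (suffix) of another; a bifix code is both. For non-empty $X,Y\subseteq A^+$, $(X,Y)$ is an alternative code if no word of $A^+$ admits two different similar alternative factorizations on $(X,Y)$ (factorizations $u_1\cdots u_n$, $n\ge2$, $u_i\in X\cup Y$, alternating between $X$ and $Y$; similar = beginning in the same set and ending in the same set); equivalently, $XY$ is a code and the product $XY$ is unambiguous. An alt-induced code is a set $XY$ with $(X,Y)$ an alternative code; a prefix (suffix, bifix) alt-induced code is an alt-induced code that is also a prefix (suffix, bifix) code. *)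

(* Defs.v *)
From mathcomp Require Import all_boot.
Set Implicit Arguments. Unset Strict Implicit. Unset Printing Implicit Defensive.

Definition lang (A : finType) := seq A -> Prop.

Definition nonempty_words (A : finType) (X : lang A) : Prop :=
  forall w, X w -> w <> [::].

Definition lprod (A : finType) (Z Z' : lang A) : lang A :=
  fun w => exists z z', [/\ Z z, Z' z' & w = z ++ z'].

Definition is_code (A : finType) (X : lang A) : Prop :=
  nonempty_words X /\
  forall us vs : seq (seq A), (forall u, u \in us -> X u) ->
    (forall v, v \in vs -> X v) -> flatten us = flatten vs -> us = vs.

Definition prefix_code (A : finType) (X : lang A) : Prop :=
  nonempty_words X /\
  forall u v, X u -> X v -> prefix u v -> u = v.

Definition suffix_code (A : finType) (X : lang A) : Prop :=
  nonempty_words X /\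
  forall u v, X u -> X v -> suffix u v -> u = v.

(* The set from which the i-th factor (0-indexed) of an alternative
   factorization beginning in X (b = true) or in Y (b = false) is taken. *)
Definition alt_set (A : finType) (X Y : lang A) (b : bool) (i : nat) : lang A :=
  if odd i then (if b then Y else X) else (if b then X else Y).

Definition alt_fact (A : finType) (X Y : lang A) (b : bool) (us : seq (seq A)) : Prop :=
  2 <= size us /\ forall i, i < size us -> alt_set X Y b i (nth [::] us i).

(* (X,Y) is an alternative code: X, Y non-empty subsets of A^+, and no word
   admits two different similar alternative factorizations (similar = same
   beginning set and same ending set; the ending set is determined by the
   beginning set and the parity of the number of factors). *)
Definition alt_code (A : finType) (X Y : lang A) : Prop :=
  [/\ nonempty_words X, nonempty_words Y, (exists x, X x), (exists y, Y y) &
   forall (b : bool) (us vs : seq (seq A)),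
     alt_fact X Y b us -> alt_fact X Y b vs ->
     odd (size us) = odd (size vs) ->
     flatten us = flatten vs -> us = vs].

Definition alt_induced (A : finType) (Z : lang A) : Prop :=
  exists X Y : lang A, alt_code X Y /\ forall w, Z w <-> lprod X Y w.

Definition prefix_alt_induced (A : finType) (Z : lang A) : Prop :=
  alt_induced Z /\ prefix_code Z.
Definition suffix_alt_induced (A : finType) (Z : lang A) : Prop :=
  alt_induced Z /\ suffix_code Z.
Definition bifix_alt_induced (A : finType) (Z : lang A) : Prop :=
  alt_induced Z /\ prefix_code Z /\ suffix_code Z.

(* Main.v *)
Require Import Defs.
From mathcomp Require Import all_boot.
Set Implicit Arguments. Unset Strict Implicit.

Section S.
Variable A : finType.

Lemma catK (a b c : seq A) : a ++ b = a ++ c -> b = c.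
Proof. by elim: a => //= x a IH [] /IH. Qed.

Lemma catK2 (a b c : seq A) : a ++ b = c ++ b -> a = c.
Proof.
move=> E; have := congr1 rev E; rewrite !rev_cat => /catK /(congr1 rev).
by rewrite !revK.
Qed.

Lemma cat_split (a b c d : seq A) : a ++ b = c ++ d -> size a <= size c ->
  c = a ++ drop (size a) c /\ b = drop (size a) c ++ d.
Proof.
move=> E le.
have Hc: c = a ++ drop (size a) c.
  have: take (size a) (a ++ b) = take (size a) (c ++ d) by rewrite E.
  rewrite take_size_cat // takel_cat // => Ha. by rewrite -{1}(cat_take_drop (size a) c) -Ha.
split=> //. apply: (@catK a). by rewrite E {1}Hc -catA.
Qed.

Lemma pcode_eq (P : lang A) (x y b d : seq A) : prefix_code P -> P x -> P y ->
  x ++ b = y ++ d -> x = y /\ b = d.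
Proof.
move=> [_ HP] Hx Hy E.
have [le|lt] := leqP (size x) (size y).
  have [Hc Hb] := cat_split E le.
  have exy : x = y by apply: HP => //; apply/prefixP; exists (drop (size x) y).
  split=> //; subst y; exact: catK E.
have [Hc Hb] := cat_split (esym E) (ltnW lt).
have exy : y = x by apply: HP => //; apply/prefixP; exists (drop (size y) x).
split=> //; subst y; exact: catK E.
Qed.

Lemma scode_eq (P : lang A) (x y a c : seq A) : suffix_code P -> P x -> P y ->
  a ++ x = c ++ y -> x = y /\ a = c.
Proof.
move=> [_ HP] Hx Hy E.
have Hs : size a + size x = size c + size y by rewrite -!size_cat E.
have [le|lt] := leqP (size x) (size y).
  have le' : size c <= size a by rewrite -(leq_add2r (size y)) -Hs leq_add2l.
  have [Hc Hb] := cat_split (esym E) le'.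
  have exy : x = y by apply: HP => //; apply/suffixP; exists (drop (size c) a).
  split=> //; rewrite -exy in E; exact: catK2 E.
have le' : size a <= size c.
  by rewrite -(leq_add2r (size x)) Hs leq_add2l ltnW.
have [Hc Hb] := cat_split E le'.
have exy : y = x by apply: HP => //; apply/suffixP; exists (drop (size a) c).
split=> //; rewrite exy in E; exact: catK2 E.
Qed.

Definition good (P Q : lang A) b (us : seq (seq A)) :=
  forall i, i < size us -> alt_set P Q b i (nth [::] us i).

Lemma good_cons P Q b u us : good P Q b (u :: us) ->
  (if b then P else Q) u /\ good P Q (~~ b) us.
Proof.
move=> H; split; first exact: (H 0).
move=> i Hi; have := H i.+1 Hi; clear H; rewrite /alt_set /=.
by case: b; case: (odd i).
Qed.

Lemma good_rcons P Q b u us : good P Q b (rcons us u) ->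
  good P Q b us /\ alt_set P Q b (size us) u.
Proof.
move=> H; split.
  move=> i Hi; have := H i; rewrite size_rcons nth_rcons Hi; apply; exact: ltnW.
by have := H (size us); rewrite size_rcons nth_rcons ltnn eqxx; apply.
Qed.

Lemma alt_ne (P Q : lang A) b i (w : seq A) : nonempty_words P -> nonempty_words Q ->
  alt_set P Q b i w -> w <> [::].
Proof. by move=> NP NQ; rewrite /alt_set; case: b; case: (odd i); [apply: NQ|apply: NP|apply: NP|apply: NQ]. Qed.

Lemma pdec P Q : prefix_code P -> prefix_code Q ->
  forall us b vs, good P Q b us -> good P Q b vs -> flatten us = flatten vs -> us = vs.
Proof.
move=> HP HQ; elim=> [|u us IH] b [|v vs] //= Gu Gv E.
- have [Hv _] := good_cons Gv.
  have : v = [::] by case: v E {Hv Gv}.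
  by case: b Hv {Gu Gv} => /= Hv ev; [case: (proj1 HP v Hv ev)|case: (proj1 HQ v Hv ev)].
- have [Hu _] := good_cons Gu.
  have : u = [::] by case: u E {Hu Gu}.
  by case: b Hu {Gu Gv} => /= Hu eu; [case: (proj1 HP u Hu eu)|case: (proj1 HQ u Hu eu)].
have [Hu Gu'] := good_cons Gu; have [Hv Gv'] := good_cons Gv.
have [e1 e2] : u = v /\ flatten us = flatten vs.
  by case: b Hu Hv {Gu Gv Gu' Gv'} => /= Hu Hv; [apply: (pcode_eq HP)|apply: (pcode_eq HQ)].
by rewrite e1 (IH _ _ Gu' Gv' e2).
Qed.

Lemma sdec P Q : suffix_code P -> suffix_code Q ->
  forall us b vs, good P Q b us -> good P Q b vs -> odd (size us) = odd (size vs) ->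
  flatten us = flatten vs -> us = vs.
Proof.
move=> HP HQ; elim/last_ind=> [|us u IH] b; case/lastP=> [|vs v] //=
  Gu Gv Hp; rewrite ?flatten_rcons.
- have [_ Hv] := good_rcons Gv => E.
  have : v = [::].
    by apply/nilP; move: (congr1 size E); rewrite size_cat /=; rewrite /nilp; case: (size v) => //= n; rewrite addnS.
  by move/(alt_ne (proj1 HP) (proj1 HQ) Hv).
- have [_ Hu] := good_rcons Gu => E.
  have : u = [::].
    by apply/nilP; move: (congr1 size E); rewrite size_cat /=; rewrite /nilp; case: (size u) => //= n; rewrite addnS.
  by move/(alt_ne (proj1 HP) (proj1 HQ) Hu).
move=> E.
have [Gu' Hu] := good_rcons Gu; have [Gv' Hv] := good_rcons Gv.
have Hp' : odd (size us) = odd (size vs).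
  by move: Hp; rewrite !size_rcons /=; case: (odd _); case: (odd _).
rewrite /alt_set Hp' in Hu.
have [e1 e2] : u = v /\ flatten us = flatten vs.
  by rewrite /alt_set in Hv; case: b (odd (size vs)) Hu Hv {Gu Gv Gu' Gv'} => [] [] /= Hu Hv;
    [apply: (scode_eq HQ)|apply: (scode_eq HP)|apply: (scode_eq HP)|apply: (scode_eq HQ)].
by rewrite e1 (IH _ _ Gu' Gv' Hp' e2).
Qed.

Lemma ai_ex (Z : lang A) : alt_induced Z -> exists z, Z z.
Proof.
case=> X [Y [[_ _ [x Hx] [y Hy] _] H]]; exists (x ++ y); apply/H; by exists x, y.
Qed.

Lemma lprod_ne (Z Z' : lang A) : nonempty_words Z -> nonempty_words (lprod Z Z').
Proof. by move=> NZ w [z [z' [Hz _ ->]]]; have := NZ z Hz; case: z {Hz}. Qed.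

Lemma pref_part (Z Z' : lang A) : prefix_alt_induced Z -> prefix_alt_induced Z' ->
  prefix_alt_induced (lprod Z Z').
Proof.
move=> [AZ PZ] [AZ' PZ']; split.
  exists Z, Z'; split=> //; split; [exact: PZ.1|exact: PZ'.1|exact: ai_ex|exact: ai_ex|].
  move=> b us vs [_ Gu] [_ Gv] _ E; exact: (pdec PZ PZ' Gu Gv E).
split; first exact: lprod_ne PZ.1.
move=> u v [z1 [z1' [H1 H1' ->]]] [z2 [z2' [H2 H2' ->]]] /prefixP [s E].
rewrite -catA in E.
have [e1 e2] := pcode_eq PZ H2 H1 E.
have : z1' = z2' by apply: PZ'.2 => //; apply/prefixP; exists s.
by move=> ->; rewrite e1.
Qed.

Lemma suff_part (Z Z' : lang A) : suffix_alt_induced Z -> suffix_alt_induced Z' ->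
  suffix_alt_induced (lprod Z Z').
Proof.
move=> [AZ PZ] [AZ' PZ']; split.
  exists Z, Z'; split=> //; split; [exact: PZ.1|exact: PZ'.1|exact: ai_ex|exact: ai_ex|].
  move=> b us vs [_ Gu] [_ Gv] Hp E; exact: (sdec PZ PZ' Gu Gv Hp E).
split; first exact: lprod_ne PZ.1.
move=> u v [z1 [z1' [H1 H1' ->]]] [z2 [z2' [H2 H2' ->]]] /suffixP [s E].
rewrite catA in E.
have [e1 e2] := scode_eq PZ' H2' H1' E.
have : z1 = z2 by apply: PZ.2 => //; apply/suffixP; exists s.
by move=> ->; rewrite e1.
Qed.

End S.

Theorem propositionP (A : finType) (Z Z' : lang A) :
  (prefix_alt_induced Z -> prefix_alt_induced Z' -> prefix_alt_induced (lprod Z Z')) /\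
  (suffix_alt_induced Z -> suffix_alt_induced Z' -> suffix_alt_induced (lprod Z Z')) /\
  (bifix_alt_induced Z -> bifix_alt_induced Z' -> bifix_alt_induced (lprod Z Z')).
Proof.
split; first exact: pref_part.
split; first exact: suff_part.
move=> [AZ [PZ SZ]] [AZ' [PZ' SZ']].
have [A1 P1] := pref_part (conj AZ PZ) (conj AZ' PZ').
have [_ S1] := suff_part (conj AZ SZ) (conj AZ' SZ').
by split.
Qed.
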